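(* Let $C=\mathbb{S}^1\times\mathbb{R}$ be the flat Euclidean cylinder and $f:C\to C$ a geodesic-preserving bijection. Then $f$ maps horizontal geodesics to horizontal geodesics.
   Context: $C$ carries the product of the flat metric on $\mathbb{S}^1=\mathbb{R}/\mathbb{Z}$ and the standard metric on $\mathbb{R}$. A geodesic is the image of a locally isometric immersion of the whole real line; a bijection (not assumed continuous) is geodesic-preserving if it maps every geodesic onto a geodesic as a set. Horizontal geodesics are the circles $\mathbb{S}^1\times\{r\}$. *)

(* Defs.v *)
From Stdlib Require Import Reals.
Open Scope R_scope.

(* Fractional part: frac x = x - floor x, in [0,1). Int_part is floor. *)
Definition frac (x : R) : R := x - IZR (Int_part x).

(* S^1 = R/Z, represented by canonical representatives in [0,1). *)
Definition S1 : Type := {x : R | 0 <= x < 1}.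

(* Flat (quotient) metric on R/Z: distance from a-b to the nearest integer. *)
Definition dS1 (a b : S1) : R :=
  let z := frac (proj1_sig a - proj1_sig b) in Rmin z (1 - z).

Definition Cyl : Type := (S1 * R)%type.

Definition dC (p q : Cyl) : R :=
  sqrt (dS1 (fst p) (fst q) ^ 2 + (snd p - snd q) ^ 2).

Definition local_isometry (g : R -> Cyl) : Prop :=
  forall t : R, exists eps : R, 0 < eps /\
    forall s s' : R, Rabs (s - t) < eps -> Rabs (s' - t) < eps ->
      dC (g s) (g s') = Rabs (s - s').

Definition is_geodesic (G : Cyl -> Prop) : Prop :=
  exists g : R -> Cyl, local_isometry g /\
    forall p : Cyl, G p <-> exists t : R, g t = p.

Definition image (f : Cyl -> Cyl) (G : Cyl -> Prop) : Cyl -> Prop :=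
  fun q => exists p, G p /\ f p = q.

Definition horizontal (G : Cyl -> Prop) : Prop :=
  exists r : R, forall p : Cyl, G p <-> snd p = r.

Definition bijective_map (f : Cyl -> Cyl) : Prop :=
  (forall x y, f x = f y -> x = y) /\ (forall y, exists x, f x = y).

Definition geodesic_preserving (f : Cyl -> Cyl) : Prop :=
  forall G, is_geodesic G -> is_geodesic (image f G).

(* Main.v *)
Require Import Defs.
From Stdlib Require Import Reals.
From Stdlib Require Import Lra Lia Classical ClassicalEpsilon ProofIrrelevance.
Open Scope R_scope.

Lemma LC (F : R -> R) :
  (forall t, exists e, 0 < e /\ forall s, Rabs (s - t) < e -> F s = F t) ->
  forall a b, F a = F b.
Proof.
  intros H.
  assert (D : forall t, derivable_pt_lim F t 0).
  { intros t eps Heps. destruct (H t) as [e [He HF]].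
    exists (mkposreal e He). intros h Hh Hlt. simpl in Hlt.
    rewrite (HF (t + h)) by (replace (t + h - t) with h by ring; exact Hlt).
    replace ((F t - F t) / h - 0) with 0 by (field; exact Hh).
    rewrite Rabs_R0; exact Heps. }
  set (pr := fun t => exist (fun l => derivable_pt_abs F t l) 0 (D t) : derivable_pt F t).
  intros a b. apply (null_derivative_1 F pr). intros x. reflexivity.
Qed.

Lemma Int_bounds x : IZR (Int_part x) <= x < IZR (Int_part x) + 1.
Proof. destruct (base_Int_part x). lra. Qed.

Lemma floor_uniq k x : IZR k <= x < IZR k + 1 -> Int_part x = k.
Proof.
  intros [H1 H2]. destruct (Int_bounds x) as [H3 H4].
  assert (A : (k < Int_part x + 1)%Z).
  { apply lt_IZR. rewrite plus_IZR. simpl. lra. }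
  assert (B : (Int_part x < k + 1)%Z).
  { apply lt_IZR. rewrite plus_IZR. simpl. lra. }
  lia.
Qed.

Lemma frac_range x : 0 <= frac x < 1.
Proof. unfold frac. destruct (Int_bounds x). lra. Qed.

Lemma frac_shift x n : frac (x + IZR n) = frac x.
Proof.
  unfold frac. rewrite (floor_uniq (Int_part x + n) (x + IZR n)).
  - rewrite plus_IZR. ring.
  - rewrite plus_IZR. destruct (Int_bounds x). lra.
Qed.

Lemma frac_id x : 0 <= x < 1 -> frac x = x.
Proof.
  intros Hx. unfold frac. rewrite (floor_uniq 0 x). simpl. ring. simpl. lra.
Qed.

Definition cong (x y : R) : Prop := exists n : Z, x - y = IZR n.

Lemma cong_frac x y : cong x y -> frac x = frac y.
Proof.
  intros [n Hn]. replace x with (y + IZR n) by lra. apply frac_shift.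
Qed.

Lemma frac_cong x y : frac x = frac y -> cong x y.
Proof.
  unfold frac. intros H. exists (Int_part x - Int_part y)%Z.
  rewrite minus_IZR. lra.
Qed.

Lemma int_small n : Rabs (IZR n) < 1 -> n = 0%Z.
Proof.
  intros H. apply Rabs_def2 in H. destruct H as [H1 H2].
  assert (A : (n < 1)%Z) by (apply lt_IZR; simpl; lra).
  assert (B : (-1 < n)%Z) by (apply lt_IZR; simpl; lra).
  lia.
Qed.

Lemma int_big n : n <> 0%Z -> 1 <= Rabs (IZR n).
Proof.
  intros H. destruct (ZArith_dec.Z_lt_le_dec n 0%Z) as [A|A].
  - assert (B : (n <= -1)%Z) by lia. apply IZR_le in B.
    rewrite Rabs_left; simpl in *; lra.
  - assert (B : (1 <= n)%Z) by lia. apply IZR_le in B.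
    rewrite Rabs_right; simpl in *; lra.
Qed.

Definition dZ (x : R) : R := Rmin (frac x) (1 - frac x).

Lemma dZ_ge0 x : 0 <= dZ x.
Proof. unfold dZ. destruct (frac_range x). apply Rmin_glb; lra. Qed.

Lemma dZ_le x n : dZ x <= Rabs (x - IZR n).
Proof.
  unfold dZ, frac. set (k := Int_part x). destruct (Int_bounds x) as [H1 H2].
  fold k in H1, H2.
  destruct (ZArith_dec.Z_le_gt_dec n k) as [A|A].
  - apply IZR_le in A. rewrite Rabs_right by lra.
    apply Rle_trans with (x - IZR k). apply Rmin_l. lra.
  - assert (B : (k + 1 <= n)%Z) by lia. apply IZR_le in B. rewrite plus_IZR in B.
    simpl in B. rewrite Rabs_left1 by lra.
    apply Rle_trans with (1 - (x - IZR k)). apply Rmin_r. lra.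
Qed.

Lemma dZ_att x : exists n, dZ x = Rabs (x - IZR n).
Proof.
  unfold dZ, frac. set (k := Int_part x). destruct (Int_bounds x) as [H1 H2].
  fold k in H1, H2.
  destruct (Rle_dec (x - IZR k) (1 - (x - IZR k))) as [A|A].
  - exists k. rewrite Rmin_left by lra. rewrite Rabs_right by lra. reflexivity.
  - exists (k + 1)%Z. rewrite Rmin_right by lra. rewrite plus_IZR. simpl.
    rewrite Rabs_left1 by lra. ring.
Qed.

Lemma dZ_pm x : exists n, x - IZR n = dZ x \/ x - IZR n = - dZ x.
Proof.
  destruct (dZ_att x) as [n Hn]. exists n. rewrite Hn.
  destruct (Rle_dec 0 (x - IZR n)).
  - left. rewrite Rabs_right; lra.
  - right. rewrite Rabs_left; lra.
Qed.

Lemma dZ_shift x n : dZ (x + IZR n) = dZ x.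
Proof. unfold dZ. rewrite frac_shift. reflexivity. Qed.

Lemma dZ_opp x : dZ (- x) = dZ x.
Proof.
  apply Rle_antisym.
  - destruct (dZ_att x) as [n Hn]. rewrite Hn.
    replace (Rabs (x - IZR n)) with (Rabs (- x - IZR (- n))).
    apply dZ_le. rewrite opp_IZR. rewrite <- Rabs_Ropp. f_equal. ring.
  - destruct (dZ_att (- x)) as [n Hn]. rewrite Hn.
    replace (Rabs (- x - IZR n)) with (Rabs (x - IZR (- n))).
    apply dZ_le. rewrite opp_IZR. rewrite <- Rabs_Ropp. f_equal. ring.
Qed.

Lemma dZ_tri x y : dZ (x + y) <= dZ x + dZ y.
Proof.
  destruct (dZ_att x) as [n Hn]. destruct (dZ_att y) as [m Hm].
  rewrite Hn, Hm. apply Rle_trans with (Rabs (x + y - IZR (n + m))).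
  apply dZ_le. rewrite plus_IZR.
  replace (x + y - (IZR n + IZR m)) with ((x - IZR n) + (y - IZR m)) by ring.
  apply Rabs_triang.
Qed.

Lemma dZ_small x : Rabs x <= 1/2 -> dZ x = Rabs x.
Proof.
  intros Hx. apply Rle_antisym.
  - replace (Rabs x) with (Rabs (x - IZR 0)) by (f_equal; simpl; ring). apply dZ_le.
  - destruct (dZ_att x) as [n Hn]. rewrite Hn.
    destruct (Z.eq_dec n 0) as [E|E].
    + subst. simpl. rewrite Rminus_0_r. apply Rle_refl.
    + apply int_big in E.
      assert (T := Rabs_triang_inv (IZR n) x).
      rewrite Rabs_minus_sym. lra.
Qed.

Definition xs (p : Cyl) : R := proj1_sig (fst p).

Lemma xs_range p : 0 <= xs p < 1.
Proof. destruct p as [[x hx] y]. exact hx. Qed.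

Lemma cyl_ext p q : xs p = xs q -> snd p = snd q -> p = q.
Proof.
  destruct p as [[x hx] y], q as [[x' hx'] y']. unfold xs; simpl. intros -> ->.
  f_equal. f_equal. apply proof_irrelevance.
Qed.

Lemma win g : local_isometry g -> forall t, exists e, 0 < e <= 1/8 /\
  forall s s', Rabs (s - t) < e -> Rabs (s' - t) < e ->
  dZ (xs (g s) - xs (g s')) ^ 2 + (snd (g s) - snd (g s')) ^ 2 = (s - s') ^ 2.
Proof.
  intros Hg t. destruct (Hg t) as [e [He H]]. exists (Rmin e (1/8)).
  split. split. apply Rmin_glb_lt; lra. apply Rmin_r.
  intros s s' Hs Hs'.
  assert (Hm := Rmin_l e (1/8)).
  specialize (H s s' ltac:(lra) ltac:(lra)). unfold dC in H.
  change (dS1 (fst (g s)) (fst (g s'))) with (dZ (xs (g s) - xs (g s'))) in H.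
  set (A := dZ (xs (g s) - xs (g s')) ^ 2 + (snd (g s) - snd (g s')) ^ 2) in *.
  assert (HA : 0 <= A) by (unfold A; apply Rplus_le_le_0_compat; apply pow2_ge_0).
  rewrite <- (sqrt_sqrt A HA). rewrite H.
  rewrite <- Rabs_mult. rewrite Rabs_right by (apply Rle_ge; apply Rle_0_sqr). ring.
Qed.

Lemma triple_alg u12 u23 u13 a b d12 d23 : 0 < d12 -> 0 < d23 -> 0 <= u12 -> 0 <= u23 ->
  0 <= u13 -> u13 <= u12 + u23 -> u12^2 + a^2 = d12^2 -> u23^2 + b^2 = d23^2 ->
  u13^2 + (a+b)^2 = (d12+d23)^2 -> a*d23 = b*d12.
Proof.
  intros H1 H2 H3 H4 H5 H6 E1 E2 E3.
  assert (S0 : u13^2 <= (u12+u23)^2) by nra.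
  assert (S1 : d12*d23 <= u12*u23 + a*b) by nra.
  assert (S2a : u12 <= d12) by nra.
  assert (S2b : u23 <= d23) by nra.
  assert (S3 : 0 <= a*b) by (assert (0 <= (d12 - u12)*u23) by nra; assert (0 <= d12*(d23 - u23)) by nra; nra).
  assert (S4 : (u12*b - u23*a)^2 <= 0).
  { assert (I : (u12^2+a^2)*(u23^2+b^2) - (u12*u23+a*b)^2 = (u12*b - u23*a)^2) by ring.
    rewrite <- I, E1, E2. assert (P0 : 0 <= d12*d23) by nra.
    assert (P1 : 0 <= (u12*u23+a*b - d12*d23)*(u12*u23+a*b + d12*d23)) by (apply Rmult_le_pos; lra). nra. }
  assert (S5 : u12*b = u23*a) by (assert (Q : (u12*b - u23*a)^2 = 0) by (assert (0 <= (u12*b - u23*a)^2) by apply pow2_ge_0; lra); assert (Q' : (u12*b - u23*a)*(u12*b - u23*a) = 0) by (rewrite <- Q; ring); destruct (Rmult_integral _ _ Q'); lra).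
  assert (S6 : (a*d23)^2 = (b*d12)^2).
  { replace ((a*d23)^2) with (a^2*d23^2) by ring. replace ((b*d12)^2) with (b^2*d12^2) by ring.
    rewrite <- E1, <- E2. nra. }
  assert (S7 : (a*d23 - b*d12)*(a*d23 + b*d12) = 0) by nra.
  destruct (Rmult_integral _ _ S7) as [S|S]. lra.
  assert (Z1 : a*a*d23 = -(a*b)*d12) by (transitivity (a*(a*d23)); [ring| replace (a*d23) with (-(b*d12)) by lra; ring]).
  assert (Z2 : a*a*d23 <= 0) by nra.
  assert (Z3 : a*a = 0).
  { assert (0 <= a*a) by nra. assert (a*a <= 0). { apply (Rmult_le_reg_r d23). lra. lra. } lra. }
  destruct (Rmult_integral _ _ Z3) as [Z4|Z4]; subst;
  assert (Z5 : b*d12 = 0) by lra; destruct (Rmult_integral _ _ Z5); subst; lra.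
Qed.

Lemma triple g : local_isometry g -> forall t e,
  (forall s s', Rabs (s - t) < e -> Rabs (s' - t) < e ->
  dZ (xs (g s) - xs (g s')) ^ 2 + (snd (g s) - snd (g s')) ^ 2 = (s - s') ^ 2) ->
  forall s1 s2 s3, s1 < s2 -> s2 < s3 -> Rabs (s1 - t) < e -> Rabs (s2 - t) < e -> Rabs (s3 - t) < e ->
  (snd (g s2) - snd (g s1)) * (s3 - s2) = (snd (g s3) - snd (g s2)) * (s2 - s1).
Proof.
  intros Hg t e W s1 s2 s3 L1 L2 A1 A2 A3.
  assert (E1 := W s1 s2 A1 A2). assert (E2 := W s2 s3 A2 A3). assert (E3 := W s1 s3 A1 A3).
  set (x1 := xs (g s1)) in *. set (x2 := xs (g s2)) in *. set (x3 := xs (g s3)) in *.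
  assert (T : dZ (x1 - x3) <= dZ (x1 - x2) + dZ (x2 - x3)).
  { replace (x1 - x3) with ((x1 - x2) + (x2 - x3)) by ring. apply dZ_tri. }
  assert (K := triple_alg (dZ (x1 - x2)) (dZ (x2 - x3)) (dZ (x1 - x3))
     (snd (g s1) - snd (g s2)) (snd (g s2) - snd (g s3)) (s2 - s1) (s3 - s2)
     ltac:(lra) ltac:(lra) (dZ_ge0 _) (dZ_ge0 _) (dZ_ge0 _) T).
  assert (K' : (snd (g s1) - snd (g s2)) * (s3 - s2) = (snd (g s2) - snd (g s3)) * (s2 - s1)).
  { apply K. rewrite E1. ring. rewrite E2. ring.
    replace (snd (g s1) - snd (g s2) + (snd (g s2) - snd (g s3))) with (snd (g s1) - snd (g s3)) by ring.
    rewrite E3. ring. }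
  lra.
Qed.

Lemma loc_aff g : local_isometry g -> forall t, exists m e, 0 < e /\
  forall s, Rabs (s - t) < e -> snd (g s) = snd (g t) + m * (s - t).
Proof.
  intros Hg t. destruct (win g Hg t) as [e [He W]].
  set (t' := t + e/2).
  exists ((snd (g t') - snd (g t)) / (e/2)), e. split. lra.
  intros s Hs.
  assert (Ht : Rabs (t - t) < e) by (rewrite Rminus_diag, Rabs_R0; lra).
  assert (Ht' : Rabs (t' - t) < e) by (unfold t'; rewrite Rabs_right; lra).
  assert (E : snd (g s) * (e/2) = snd (g t) * (e/2) + (snd (g t') - snd (g t)) * (s - t)).
  { destruct (total_order_T s t) as [[L|L]|L].
    - assert (Tr := triple g Hg t e W s t t' L ltac:(unfold t'; lra) Hs Ht Ht').
      replace (t' - t) with (e/2) in Tr by (unfold t'; ring). nra.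
    - subst. ring.
    - destruct (total_order_T s t') as [[L'|L']|L'].
      + assert (Tr := triple g Hg t e W t s t' L L' Ht Hs Ht').
        replace t' with (t + e/2) in * by reflexivity. nra.
      + rewrite L'. unfold t'. ring.
      + assert (Tr := triple g Hg t e W t t' s ltac:(unfold t'; lra) L' Ht Ht' Hs).
        replace t' with (t + e/2) in * by reflexivity. nra. }
  replace (snd (g s)) with (snd (g s) * (e/2) / (e/2)) by (field; lra).
  rewrite E. field. lra.
Qed.

Lemma near_pt s t e e' : 0 < e -> 0 < e' -> Rabs (s - t) < e/2 ->
  let x := s + Rmin e' (e/2) / 2 in
  0 < x - s /\ Rabs (x - s) < e' /\ Rabs (x - t) < e /\ x - s <= 1/2 * e'.
Proof.
  intros He He' Hs x. unfold x.
  assert (M1 := Rmin_l e' (e/2)). assert (M2 := Rmin_r e' (e/2)).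
  assert (M0 : 0 < Rmin e' (e/2)) by (apply Rmin_glb_lt; lra).
  apply Rabs_def2 in Hs.
  repeat split.
  - lra.
  - rewrite Rabs_right; lra.
  - apply Rabs_def1; lra.
  - lra.
Qed.

Lemma h_affine g : local_isometry g -> exists r0 b, forall t, snd (g t) = r0 + b * t.
Proof.
  intros Hg.
  set (M := fun t => proj1_sig (constructive_indefinite_description _ (loc_aff g Hg t))).
  assert (HM : forall t, exists e, 0 < e /\ forall s, Rabs (s - t) < e -> snd (g s) = snd (g t) + M t * (s - t)).
  { intros t. exact (proj2_sig (constructive_indefinite_description _ (loc_aff g Hg t))). }
  assert (MC : forall a b, M a = M b).
  { apply LC. intros t. destruct (HM t) as [e [He Ht]]. exists (e/2). split. lra.
    intros s Hs. destruct (HM s) as [e' [He' Hs']].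
    destruct (near_pt s t e e' He He' Hs) as [P1 [P2 [P3 _]]].
    set (x := s + Rmin e' (e/2) / 2) in *.
    assert (E1 := Hs' x P2). assert (E2 := Ht x P3).
    assert (E3 := Ht s ltac:(apply Rabs_def2 in Hs; apply Rabs_def1; lra)).
    assert (E : (M s - M t) * (x - s) = 0) by nra.
    destruct (Rmult_integral _ _ E); lra. }
  exists (snd (g 0)), (M 0).
  set (F := fun s => snd (g s) - M 0 * s).
  assert (FC : forall a b, F a = F b).
  { apply LC. intros t. destruct (HM t) as [e [He Ht]]. exists e. split. lra.
    intros s Hs. unfold F. rewrite (Ht s Hs). rewrite (MC t 0). ring. }
  intros t. assert (K := FC t 0). unfold F in K. lra.
Qed.

Lemma sq_inj x y : 0 <= x -> 0 <= y -> x^2 = y^2 -> x = y.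
Proof.
  intros Hx Hy E. apply Rsqr_inj; auto. unfold Rsqr. nra.
Qed.

Lemma theta_win g b r0 : local_isometry g -> (forall t, snd (g t) = r0 + b * t) ->
  b^2 <= 1 /\ forall t, exists e, 0 < e <= 1/8 /\
  forall s s', Rabs (s - t) < e -> Rabs (s' - t) < e ->
  dZ (xs (g s) - xs (g s')) = sqrt (1 - b^2) * Rabs (s - s').
Proof.
  intros Hg Hh.
  assert (W : forall t, exists e, 0 < e <= 1/8 /\ forall s s', Rabs (s - t) < e -> Rabs (s' - t) < e ->
     dZ (xs (g s) - xs (g s')) ^ 2 = (1 - b^2) * (s - s')^2).
  { intros t. destruct (win g Hg t) as [e [He W]]. exists e. split. exact He.
    intros s s' Hs Hs'. assert (K := W s s' Hs Hs'). rewrite !Hh in K. nra. }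
  assert (B1 : b^2 <= 1).
  { destruct (W 0) as [e [He W0]].
    assert (K := W0 0 (e/2) ltac:(rewrite Rminus_diag, Rabs_R0; lra)
                 ltac:(rewrite Rminus_0_r, Rabs_right; lra)).
    assert (0 <= dZ (xs (g 0) - xs (g (e/2))) ^ 2) by apply pow2_ge_0.
    assert (0 < (0 - e/2)^2) by (apply pow_lt; lra) || nra.
    nra. }
  split. exact B1.
  intros t. destruct (W t) as [e [He W0]]. exists e. split. exact He.
  intros s s' Hs Hs'. apply sq_inj. apply dZ_ge0.
  apply Rmult_le_pos. apply sqrt_pos. apply Rabs_pos.
  rewrite W0 by assumption. rewrite Rpow_mult_distr.
  rewrite pow2_sqrt by lra. rewrite pow2_abs. reflexivity.
Qed.

Lemma cong_triv x y : x = y -> cong x y.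
Proof. intros ->. exists 0%Z. simpl. ring. Qed.

Lemma loc_sign g b r0 : local_isometry g -> (forall t, snd (g t) = r0 + b * t) ->
  forall t, exists a, (a = sqrt (1 - b^2) \/ a = - sqrt (1 - b^2)) /\
  exists e, 0 < e <= 1/8 /\ forall s, Rabs (s - t) < e ->
  cong (xs (g s)) (xs (g t) + a * (s - t)).
Proof.
  intros Hg Hh t. destruct (theta_win g b r0 Hg Hh) as [B1 TW].
  set (al := sqrt (1 - b^2)) in *.
  assert (A0 : 0 <= al) by apply sqrt_pos.
  assert (A1 : al <= 1).
  { assert (al^2 = 1 - b^2) by (unfold al; apply pow2_sqrt; lra).
    assert (0 <= b^2) by apply pow2_ge_0. nra. }
  destruct (TW t) as [e [He W]].
  assert (Ht : Rabs (t - t) < e) by (rewrite Rminus_diag, Rabs_R0; lra).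
  assert (PM : forall s, Rabs (s - t) < e ->
     cong (xs (g s)) (xs (g t) + al * (s - t)) \/ cong (xs (g s)) (xs (g t) - al * (s - t))).
  { intros s Hs. assert (K := W s t Hs Ht).
    destruct (dZ_pm (xs (g s) - xs (g t))) as [n Hn]. rewrite K in Hn.
    destruct (Rle_dec 0 (s - t)) as [L|L].
    - rewrite Rabs_right in Hn by lra.
      destruct Hn as [Hn|Hn]; [left|right]; exists n; lra.
    - rewrite Rabs_left in Hn by lra.
      destruct Hn as [Hn|Hn]; [right|left]; exists n; lra. }
  destruct (classic (forall s, Rabs (s - t) < e -> cong (xs (g s)) (xs (g t) + al * (s - t)))) as [P|P].
  { exists al. split. left; reflexivity. exists e. split. exact He. exact P. }
  apply not_all_ex_not in P. destruct P as [s1 P]. apply imply_to_and in P. destruct P as [Hs1 Np1].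
  assert (Hm1 : cong (xs (g s1)) (xs (g t) - al * (s1 - t))) by (destruct (PM s1 Hs1); tauto).
  exists (- al). split. right; reflexivity. exists e. split. exact He.
  intros s Hs. replace (xs (g t) + - al * (s - t)) with (xs (g t) - al * (s - t)) by ring.
  destruct (PM s Hs) as [Hp|Hm]; [|exact Hm].
  destruct (Req_dec al 0) as [Z|Z].
  { exfalso. apply Np1. rewrite Z in *. replace (xs (g t) + 0 * (s1 - t)) with (xs (g t) - 0 * (s1 - t)) by ring. exact Hm1. }
  destruct Hp as [n Hn]. destruct Hm1 as [n1 Hn1].
  assert (K := W s s1 Hs Hs1).
  replace (xs (g s) - xs (g s1)) with (al * (s + s1 - 2*t) + IZR (n - n1)) in K
    by (rewrite minus_IZR; lra).
  rewrite dZ_shift in K.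
  apply Rabs_def2 in Hs. apply Rabs_def2 in Hs1.
  rewrite dZ_small in K.
  2:{ rewrite Rabs_mult, (Rabs_right al) by lra.
      assert (Rabs (s + s1 - 2*t) <= 1/4) by (apply Rabs_le; lra). nra. }
  rewrite Rabs_mult, (Rabs_right al) in K by lra.
  assert (K2 : Rabs (s + s1 - 2*t) = Rabs (s - s1)).
  { apply (Rmult_eq_reg_l al). exact K. exact Z. }
  assert (K3 : (s + s1 - 2*t)^2 = (s - s1)^2) by (rewrite <- (pow2_abs (s + s1 - 2*t)), <- (pow2_abs (s - s1)), K2; reflexivity).
  assert (K4 : (s - t) * (s1 - t) = 0) by nra.
  destruct (Rmult_integral _ _ K4) as [K5|K5].
  - apply cong_triv. replace s with t by lra. ring.
  - exfalso. apply Np1. apply cong_triv. replace s1 with t by lra. ring.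
Qed.

Lemma classify g : local_isometry g -> exists c a b r0, a^2 + b^2 = 1 /\
  forall t, xs (g t) = frac (c + a * t) /\ snd (g t) = r0 + b * t.
Proof.
  intros Hg. destruct (h_affine g Hg) as [r0 [b Hh]].
  destruct (theta_win g b r0 Hg Hh) as [B1 _].
  set (al := sqrt (1 - b^2)).
  assert (Al2 : al^2 = 1 - b^2) by (unfold al; apply pow2_sqrt; lra).
  assert (A1 : al <= 1).
  { assert (0 <= al) by apply sqrt_pos. assert (0 <= b^2) by apply pow2_ge_0. nra. }
  set (Af := fun t => proj1_sig (constructive_indefinite_description _ (loc_sign g b r0 Hg Hh t))).
  assert (HA : forall t, (Af t = al \/ Af t = - al) /\ exists e, 0 < e <= 1/8 /\ forall s, Rabs (s - t) < e ->
      cong (xs (g s)) (xs (g t) + Af t * (s - t))).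
  { intros t. exact (proj2_sig (constructive_indefinite_description _ (loc_sign g b r0 Hg Hh t))). }
  assert (AC : forall u v, Af u = Af v).
  { apply LC. intros t. destruct (HA t) as [St [e [He Ht]]]. exists (e/2). split. lra.
    intros s Hs. destruct (HA s) as [Ss [e' [He' Hs']]].
    destruct (near_pt s t e e' ltac:(lra) ltac:(lra) Hs) as [P1 [P2 [P3 P4]]].
    set (x := s + Rmin e' (e/2) / 2) in *.
    destruct (Hs' x P2) as [n1 E1]. destruct (Ht x P3) as [n2 E2].
    destruct (Ht s ltac:(apply Rabs_def2 in Hs; apply Rabs_def1; lra)) as [n3 E3].
    assert (E : (Af s - Af t) * (x - s) = IZR (n2 - n3 - n1)) by (rewrite !minus_IZR; lra).
    assert (Bd : Rabs ((Af s - Af t) * (x - s)) < 1).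
    { rewrite Rabs_mult. rewrite (Rabs_right (x - s)) by lra.
      assert (Rabs (Af s - Af t) <= 2).
      { apply Rabs_le. destruct St as [-> | ->]; destruct Ss as [-> | ->];
        assert (0 <= al) by apply sqrt_pos; lra. }
      assert (0 <= Rabs (Af s - Af t)) by apply Rabs_pos. nra. }
    rewrite E in Bd. apply int_small in Bd. rewrite Bd in E. simpl in E.
    destruct (Rmult_integral _ _ E); lra. }
  set (a0 := Af 0).
  set (F := fun s => frac (xs (g s) - a0 * s)).
  assert (FC : forall u v, F u = F v).
  { apply LC. intros t. destruct (HA t) as [_ [e [He Ht]]]. exists e. split. lra.
    intros s Hs. unfold F. apply cong_frac. destruct (Ht s Hs) as [n En]. exists n.
    unfold a0. rewrite (AC 0 t). lra. }
  exists (xs (g 0)), a0, b, r0. split.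
  - assert (a0 ^2 = al^2) by (unfold a0; destruct (HA 0) as [[-> | ->] _]; ring). lra.
  - intros t. split; [|apply Hh].
    assert (K := FC t 0). unfold F in K. apply frac_cong in K. destruct K as [n En].
    rewrite <- (frac_id (xs (g t))) by apply xs_range.
    apply cong_frac. exists n. rewrite Rmult_0_r, Rminus_0_r in En. lra.
Qed.

Definition hx (c a b r0 t : R) : Cyl :=
  (exist (fun x => 0 <= x < 1) (frac (c + a*t)) (frac_range (c + a*t)), r0 + b*t).

Lemma hx_xs c a b r0 t : xs (hx c a b r0 t) = frac (c + a*t).
Proof. reflexivity. Qed.
Lemma hx_snd c a b r0 t : snd (hx c a b r0 t) = r0 + b*t.
Proof. reflexivity. Qed.

Lemma hx_iso c a b r0 : a^2 + b^2 = 1 -> local_isometry (hx c a b r0).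
Proof.
  intros E t. exists (1/4). split. lra. intros s s' Hs Hs'.
  unfold dC. change (dS1 (fst (hx c a b r0 s)) (fst (hx c a b r0 s')))
    with (dZ (xs (hx c a b r0 s) - xs (hx c a b r0 s'))).
  rewrite !hx_xs, !hx_snd.
  replace (frac (c + a*s) - frac (c + a*s')) with
    (a * (s - s') + IZR (Int_part (c + a*s') - Int_part (c + a*s)))
    by (unfold frac; rewrite minus_IZR; ring).
  rewrite dZ_shift.
  apply Rabs_def2 in Hs. apply Rabs_def2 in Hs'.
  assert (Ha : Rabs a <= 1).
  { apply Rabs_le. assert (0 <= b^2) by apply pow2_ge_0. nra. }
  rewrite dZ_small.
  2:{ rewrite Rabs_mult. assert (Rabs (s - s') <= 1/2) by (apply Rabs_le; lra).
      assert (0 <= Rabs a) by apply Rabs_pos. assert (0 <= Rabs (s - s')) by apply Rabs_pos.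
      apply Rle_trans with (1 * (1/2)); [apply Rmult_le_compat; lra | lra]. }
  rewrite pow2_abs.
  replace ((a * (s - s'))^2 + (r0 + b*s - (r0 + b*s'))^2) with (Rsqr (s - s')).
  apply sqrt_Rsqr_abs. unfold Rsqr. transitivity ((a^2+b^2)*((s-s')*(s-s'))); [rewrite E; ring | ring].
Qed.

Lemma hx_geo c a b r0 : a^2 + b^2 = 1 -> is_geodesic (fun p => exists t, hx c a b r0 t = p).
Proof.
  intros E. exists (hx c a b r0). split. apply hx_iso; exact E. tauto.
Qed.

Definition PG (c a b r0 : R) (G : Cyl -> Prop) : Prop :=
  forall p, G p <-> exists t, xs p = frac (c + a*t) /\ snd p = r0 + b*t.

Lemma geo_PG G : is_geodesic G -> exists c a b r0, a^2 + b^2 = 1 /\ PG c a b r0 G.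
Proof.
  intros [g [Hg HG]]. destruct (classify g Hg) as [c [a [b [r0 [E H]]]]].
  exists c, a, b, r0. split. exact E. intros p. rewrite HG. split.
  - intros [t <-]. exists t. apply H.
  - intros [t [H1 H2]]. exists t. destruct (H t) as [H3 H4]. apply cyl_ext; congruence.
Qed.

Lemma flat_full c a r0 G : PG c a 0 r0 G -> a^2 + 0^2 = 1 -> forall p, snd p = r0 -> G p.
Proof.
  intros HG E p Hp. apply HG. assert (a <> 0) by (intro; subst; lra).
  exists ((xs p - c)/a). split.
  - replace (c + a * ((xs p - c)/a)) with (xs p) by (field; assumption).
    symmetry; apply frac_id, xs_range.
  - lra.
Qed.

Lemma P1 c1 a1 b1 r1 G1 c2 a2 b2 r2 G2 q : PG c1 a1 b1 r1 G1 -> PG c2 a2 b2 r2 G2 ->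
  b1 <> 0 -> b2 <> 0 -> G1 q -> G2 q -> exists q', G1 q' /\ G2 q' /\ q' <> q.
Proof.
  intros H1 H2 Nb1 Nb2 Q1 Q2.
  destruct (proj1 (H1 q) Q1) as [t1 [X1 Y1]]. destruct (proj1 (H2 q) Q2) as [t2 [X2 Y2]].
  set (k := a1 - a2 * b1 / b2).
  assert (TK : exists tau m, tau <> 0 /\ tau * k = IZR m).
  { destruct (Req_dec k 0) as [Hk|Hk].
    - exists 1, 0%Z. split. lra. rewrite Hk. simpl. ring.
    - exists (1/k), 1%Z. split. unfold Rdiv. rewrite Rmult_1_l. apply Rinv_neq_0_compat. exact Hk.
      simpl. field. exact Hk. }
  destruct TK as [tau [m [Ht Em]]].
  rewrite X1 in X2. apply frac_cong in X2. destruct X2 as [n En].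
  exists (hx c1 a1 b1 r1 (t1 + tau)). split; [|split].
  - apply H1. exists (t1 + tau). split; reflexivity.
  - apply H2. exists (t2 + b1 * tau / b2). split.
    + rewrite hx_xs. apply cong_frac. exists (n + m)%Z. rewrite plus_IZR, <- En, <- Em.
      unfold k. field. exact Nb2.
    + rewrite hx_snd. rewrite Y1 in Y2.
      replace (r2 + b2*(t2 + b1*tau/b2)) with (r2 + b2*t2 + b1*tau) by (field; exact Nb2). lra.
  - intro E. assert (S := f_equal snd E). rewrite hx_snd, Y1 in S.
    apply Ht. apply (Rmult_eq_reg_l b1). lra. exact Nb1.
Qed.

Lemma frac_c x y : x = y -> frac x = frac y.
Proof. intros ->; reflexivity. Qed.

Theorem lemma4p2 (f : Cyl -> Cyl) :
  bijective_map f -> geodesic_preserving f ->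
  forall G : Cyl -> Prop, horizontal G -> horizontal (image f G).
Proof.
  intros [Inj Sur] GP G [r HG].
  assert (GG : is_geodesic G).
  { exists (hx 0 1 0 r). split. apply hx_iso. lra.
    intros p. rewrite HG. split.
    - intros Hp. exists (xs p). apply cyl_ext.
      + rewrite hx_xs. rewrite Rplus_0_l, Rmult_1_l. apply frac_id, xs_range.
      + rewrite hx_snd. lra.
    - intros [t <-]. rewrite hx_snd. ring. }
  destruct (geo_PG _ (GP G GG)) as [cK [aK [bK [rK [EK PK]]]]].
  destruct (Req_dec bK 0) as [Z|NZ].
  { subst bK. exists rK. intros p. split.
    - intros Kp. destruct (proj1 (PK p) Kp) as [t [_ H]]. lra.
    - apply (flat_full cK aK rK); assumption. }
  exfalso.
  set (V := fun p => exists t, hx 0 0 1 0 t = p).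
  assert (GV : is_geodesic V) by (apply hx_geo; lra).
  set (p0 := hx 0 0 1 0 r).
  assert (Vp0 : V p0) by (exists r; reflexivity).
  assert (Gp0 : G p0) by (apply HG; unfold p0; rewrite hx_snd; ring).
  destruct (geo_PG _ (GP V GV)) as [cV [aV [bV [rV [EV PV]]]]].
  assert (BV : bV = 0).
  { destruct (Req_dec bV 0) as [Z|NZV]; [exact Z|exfalso].
    destruct (P1 _ _ _ _ _ _ _ _ _ _ (f p0) PK PV NZ NZV) as [q' [Kq [Vq Nq]]].
    - exists p0; split; auto.
    - exists p0; split; auto.
    - destruct Kq as [h1 [Gh1 Eh1]]. destruct Vq as [v1 [Vv1 Ev1]].
      assert (hv : h1 = v1) by (apply Inj; congruence). subst v1.
      destruct Vv1 as [t Et]. apply HG in Gh1. rewrite <- Et, hx_snd in Gh1.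
      assert (t = r) by lra. subst t. apply Nq. rewrite <- Eh1, <- Et. reflexivity. }
  subst bV.
  set (X := fun p => exists t, hx 0 (3/5) (4/5) 0 t = p).
  assert (GX : is_geodesic X) by (apply hx_geo; lra).
  destruct (geo_PG _ (GP X GX)) as [cX [aX [bX [rX [EX PX]]]]].
  set (x1 := hx 0 0 1 0 0). set (x2 := hx 0 0 1 0 (4/3)).
  assert (Vx1 : V x1) by (exists 0; reflexivity).
  assert (Vx2 : V x2) by (exists (4/3); reflexivity).
  assert (Xx1 : X x1).
  { exists 0. apply cyl_ext; unfold x1; rewrite ?hx_xs, ?hx_snd.
    apply frac_c; ring. ring. }
  assert (Xx2 : X x2).
  { exists (5/3). apply cyl_ext; unfold x2; rewrite ?hx_xs, ?hx_snd.
    apply cong_frac. exists 1%Z. simpl. field. field. }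
  assert (N12 : f x1 <> f x2).
  { intro E. apply Inj in E. apply (f_equal snd) in E. unfold x1, x2 in E.
    rewrite !hx_snd in E. lra. }
  destruct (proj1 (PX (f x1)) ltac:(exists x1; split; auto)) as [u1 [XX1 XS1]].
  destruct (proj1 (PX (f x2)) ltac:(exists x2; split; auto)) as [u2 [XX2 XS2]].
  destruct (proj1 (PV (f x1)) ltac:(exists x1; split; auto)) as [w1 [_ VS1]].
  destruct (proj1 (PV (f x2)) ltac:(exists x2; split; auto)) as [w2 [_ VS2]].
  assert (BX : bX = 0).
  { destruct (Req_dec bX 0) as [Z|NZX]; [exact Z|exfalso].
    assert (u1 = u2).
    { apply (Rmult_eq_reg_l bX). lra. exact NZX. }
    subst u2. apply N12. apply cyl_ext; congruence. }
  subst bX.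
  set (y := hx 0 (3/5) (4/5) 0 1).
  destruct (proj1 (PX (f y)) ltac:(exists y; split; [exists 1; reflexivity| auto])) as [u [_ YS]].
  assert (fVy : image f V (f y)).
  { apply (flat_full cV aV rV); [exact PV | exact EV | lra]. }
  destruct fVy as [v [Vv Ev]]. apply Inj in Ev. subst v.
  destruct Vv as [t Et]. apply (f_equal xs) in Et. unfold y in Et.
  rewrite !hx_xs in Et.
  rewrite (frac_id (0 + 0*t)) in Et by lra.
  rewrite (frac_id (0 + 3/5*1)) in Et by lra. lra.
Qed.
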